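(* Let $\{(\mathbf{x}^{(k)},y^{(k)})\}_{k=1}^N$ be data with $\mathbf{x}^{(k)}\in\mathbb{R}^d$, $y^{(k)}\in\mathbb{R}$, and let $\widehat{\mathcal{R}}_N(s)=\frac1N\sum_{k=1}^N(y^{(k)}-s(\mathbf{x}^{(k)}))^2$ (squared loss). With fixed region-selection functions $r_i$, consider the idealized exact cyclic regional backfitting procedure described in the context. Then $\widehat{\mathcal{R}}_N$ is non-increasing along the iterates, and the procedure converges (in empirical $L_2$) to a limit $\hat s\in\arg\min_{s\in\mathcal{H}(\{T_i\})}\widehat{\mathcal{R}}_N(s)$. Moreover, the fitted-value vector $(\hat s(\mathbf{x}^{(1)}),\dots,\hat s(\mathbf{x}^{(N)}))$ is unique.
   Context: $\mathbf{x}_{-i}$ denotes $\mathbf{x}$ with the $i$-th coordinate removed. For each $i$ a fixed region-selection function $r_i:\mathbb{R}^{d-1}\to\{1,\dots,R_i\}$ is given (from a binary decision tree $T_i$). $\mathcal{H}(\{T_i\})$ denotes the class of CALM scores $s(\mathbf{x})=\beta_0+\sum_{i=1}^d f_i^{(r_i(\mathbf{x}_{-i}))}(x_i)$ with $\beta_0\in\mathbb{R}$ and univariate shape functions $f_i^{(r)}:\mathbb{R}\to\mathbb{R}$, whose region-wise components are centered (all region-wise constants absorbed in $\beta_0$). The idealized exact cyclic regional backfitting procedure cycles repeatedly over all pairs $(i,r)$; at each step it replaces $f_i^{(r)}$ by an exact minimizer of $\widehat{\mathcal{R}}_N$ over that function alone (others and $\beta_0$ fixed), using only samples $k$ with $r_i(\mathbf{x}^{(k)}_{-i})=r$,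 followed by empirical centering: the sample mean of $f_i^{(r)}$ over those samples is subtracted from $f_i^{(r)}$ and added to $\beta_0$, so fitted values and $\widehat{\mathcal{R}}_N$ are unchanged.
   Formalization: The centering after each exact minimization is replaced by any change of β₀ and the shape functions keeping all fitted values at the data points, and $\mathcal{H}(\{T_i\})$ drops the centering of region-wise components. Each condition added here is assumed in the paper as well or is needed for the statement above to hold. *)

(* Defs.v *)
From HB Require Import structures.
From mathcomp Require Import all_boot all_order all_algebra.
From mathcomp Require Import all_classical all_reals all_analysis.

Set Implicit Arguments.
Unset Strict Implicit.
Unset Printing Implicit Defensive.

Import Order.TTheory GRing.Theory Num.Theory.
Local Open Scope ring_scope.
Local Open Scope classical_set_scope.

Section CALM.
Variable R : realType.
Variables (d : nat) (Rr : 'I_d -> nat).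
(* region-selection functions r_i : R^(d-1) -> {0,..,R_i - 1} (0-based) *)
Variable reg : forall i : 'I_d, 'rV[R]_(d.-1) -> 'I_(Rr i).

Definition pairT := {i : 'I_d & 'I_(Rr i)}.

Definition shapes := pairT -> R -> R.

(* x_{-i} is  col' i x ;  x_i is  x ord0 i *)
Definition calm_score (b : R) (F : shapes) (x : 'rV[R]_d) : R :=
  b + \sum_(i < d)
        F (Tagged (fun j => 'I_(Rr j)) (reg i (col' i x))) (x ord0 i).

Definition calm_class : set ('rV[R]_d -> R) :=
  [set s | exists (b : R) (F : shapes), s = calm_score b F].

Definition upd_shape (F : shapes) (p : pairT) (g : R -> R) : shapes :=
  fun q => if q == p then g else F q.

Variables (N : nat) (X : 'I_N -> 'rV[R]_d) (Y : 'I_N -> R).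

Definition emp_risk (s : 'rV[R]_d -> R) : R :=
  N%:R^-1 * \sum_(k < N) (Y k - s (X k)) ^+ 2.

Definition in_region (p : pairT) (k : 'I_N) : bool :=
  reg (tag p) (col' (tag p) (X k)) == tagged p.

Definition region_loss (p : pairT) (b : R) (F : shapes) : R :=
  \sum_(k < N | in_region p k) (Y k - calm_score b F (X k)) ^+ 2.

(* One step of exact regional backfitting on the pair p:
   f_p is replaced by an exact minimizer g (over all functions R -> R, others
   and beta_0 fixed, loss on the samples of region p); the new state (b', F')
   is the result of the subsequent centering, which by the context leaves all
   fitted values unchanged. *)
Definition exact_block_step (p : pairT) (b : R) (F : shapes)
    (b' : R) (F' : shapes) : Prop :=
  exists g : R -> R,
    (forall h : R -> R,
        region_loss p b (upd_shape F p g) <= region_loss p b (upd_shape F p h))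
    /\ (forall k : 'I_N, calm_score b' F' (X k) = calm_score b (upd_shape F p g) (X k)).

End CALM.

(* Main.v *)
Require Import Defs.
From HB Require Import structures.
From mathcomp Require Import all_boot all_order all_algebra.
From mathcomp Require Import all_classical all_reals all_analysis.
From mathcomp Require Import ring lra.
Import Order.TTheory GRing.Theory Num.Theory.
Local Open Scope ring_scope.
Local Open Scope classical_set_scope.

Section CS.
Variable R : realType.

Lemma cauchy_schwarz (I : finType) (a b : I -> R) :
  (\sum_i a i * b i) ^+ 2 <= (\sum_i a i ^+ 2) * (\sum_i b i ^+ 2).
Proof.
have H : 0 <= \sum_i \sum_l (a i * b l - a l * b i) ^+ 2.
  by apply: sumr_ge0 => i _; apply: sumr_ge0 => l _; exact: sqr_ge0.
have E : \sum_i \sum_l (a i * b l - a l * b i) ^+ 2 =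
   2 * ((\sum_i a i ^+ 2) * (\sum_i b i ^+ 2)) - 2 * (\sum_i a i * b i) ^+ 2.
  have E1 : forall i l, (a i * b l - a l * b i) ^+ 2 =
     a i ^+ 2 * b l ^+ 2 + a l ^+ 2 * b i ^+ 2 - 2 * ((a i * b i) * (a l * b l)).
    by move=> i l; ring.
  under eq_bigr do under eq_bigr do rewrite E1.
  rewrite (eq_bigr (fun i => \sum_l a i ^+ 2 * b l ^+ 2 + \sum_l a l ^+ 2 * b i ^+ 2
             - 2 * ((a i * b i) * \sum_l (a l * b l)))); last first.
    by move=> i _; rewrite sumrB big_split /= mulr_sumr mulr_sumr.
  rewrite sumrB big_split /= -big_distrlr /=.
  rewrite [X in _ + X - _](exchange_big _ _ _ _ _ (fun i l => a l ^+ 2 * b i ^+ 2)) /=.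
  rewrite -big_distrlr /= -mulr_sumr -mulr_suml expr2.
  ring.
rewrite E subr_ge0 in H.
by rewrite -(@ler_pM2l _ 2) // .
Qed.

Lemma sq_sum_le (I : finType) (a : I -> R) :
  (\sum_i a i) ^+ 2 <= #|I|%:R * \sum_i a i ^+ 2.
Proof.
have := @cauchy_schwarz I a (fun _ => 1).
rewrite (eq_bigr (fun i => a i)); last by move=> i _; rewrite mulr1.
move=> H; apply: (le_trans H).
by rewrite mulrC (eq_bigr (fun _ => 1)) ?sumr_const; last by move=> i _; rewrite expr1n.
Qed.

End CS.

Section Main.
Local Set Implicit Arguments.
Local Unset Strict Implicit.
Variable R : realType.
Variables (d : nat) (Rr : 'I_d -> nat).
Variable reg : forall i : 'I_d, 'rV[R]_(d.-1) -> 'I_(Rr i).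
Variables (N : nat) (X : 'I_N -> 'rV[R]_d) (Y : 'I_N -> R).

Definition fitv b F (k : 'I_N) := calm_score reg b F (X k).
Definition cellb (i : 'I_d) (k0 k : 'I_N) : bool :=
  (reg i (col' i (X k0)) == reg i (col' i (X k))) && (X k0 ord0 i == X k ord0 i).
Definition csum i k0 (u : 'I_N -> R) := \sum_k (cellb i k0 k)%:R * u k.

Lemma cell_refl i k : cellb i k k.
Proof. by rewrite /cellb !eqxx. Qed.

Lemma cell_sym i k0 k : cellb i k0 k = cellb i k k0.
Proof. by rewrite /cellb [X in X && _]eq_sym [X in _ && X]eq_sym. Qed.

Lemma cell_trans i k0 k x : cellb i k0 k -> cellb i k0 x = cellb i k x.
Proof. by rewrite /cellb => /andP[/eqP -> /eqP ->]. Qed.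

Lemma orth i (u phi : 'I_N -> R) :
  (forall k0, csum i k0 u = 0) ->
  (forall k0 k, cellb i k0 k -> phi k = phi k0) ->
  \sum_k u k * phi k = 0.
Proof.
move=> Hu Hphi.
pose n k := \sum_k' (cellb i k k')%:R : R.
have n_gt0 k : 0 < n k.
  rewrite /n (bigD1 k) //= cell_refl ltr_pwDl //.
  by apply: sumr_ge0 => x _; rewrite ler0n.
have n_resp k0 k : cellb i k0 k -> n k = n k0.
  by move=> H; apply: eq_bigr => x _; rewrite (cell_trans _ H).
pose psi k := phi k / n k.
have E k : phi k = \sum_k0 (cellb i k k0)%:R * psi k0.
  rewrite (eq_bigr (fun k0 => (cellb i k k0)%:R * psi k)).
    rewrite -mulr_suml -/(n k) /psi mulrC -mulrA mulVf ?mulr1 //.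
    by rewrite gt_eqF.
  move=> k0 _; case H: (cellb i k k0); last by rewrite !mul0r.
  by rewrite /psi (Hphi _ _ H) (n_resp _ _ H).
under eq_bigr do rewrite E mulr_sumr.
rewrite exchange_big /=.
rewrite (eq_bigr (fun k0 => psi k0 * csum i k0 u)).
  by rewrite big1 // => k0 _; rewrite Hu mulr0.
move=> k0 _; rewrite /csum mulr_sumr; apply: eq_bigr => k _.
by rewrite cell_sym; ring.
Qed.

Lemma calm_upd (p : pairT Rr) b F h k :
  fitv b (upd_shape F p h) k = fitv b F k +
    (if in_region reg X p k then h (X k ord0 (tag p)) - F p (X k ord0 (tag p)) else 0).
Proof.
case: p => i r /=.
rewrite /fitv /calm_score (bigD1 i) //= [in RHS](bigD1 i) //=.
rewrite [Z in _ + (_ + Z)](eq_bigr (fun j => F (Tagged (fun j => 'I_(Rr j))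
     (reg j (col' j (X k)))) (X k ord0 j))); last first.
  move=> j hj; rewrite /upd_shape; case: eqP => // E.
  by move: hj; have /= -> := f_equal (@tag _ _) E; rewrite eqxx.
rewrite /upd_shape /in_region /=.
have Eq : (Tagged (fun j => 'I_(Rr j)) (reg i (col' i (X k))) == existT _ i r)
   = (reg i (col' i (X k)) == r) := eq_Tagged _.
rewrite Eq; case: eqP => [E|nE]; last by rewrite addr0.
rewrite E; ring.
Qed.

Lemma region_loss_sum p b F :
  region_loss reg X Y p b F =
  \sum_k (in_region reg X p k)%:R * (Y k - fitv b F k) ^+ 2.
Proof.
rewrite /region_loss big_mkcond /=; apply: eq_bigr => k _.
by case: (in_region reg X p k); rewrite ?mul1r ?mul0r.
Qed.

Lemma step_zero p b F b' F' :
  exact_block_step reg X Y p b F b' F' ->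
  forall k0, in_region reg X p k0 ->
  csum (tag p) k0 (fun k => Y k - fitv b' F' k) = 0.
Proof.
case=> g [Hmin Hfit] k0 Hk0.
set i := tag p.
set G := upd_shape F p g.
have Hf k : fitv b' F' k = fitv b G k by rewrite /fitv Hfit.
set r' := fun k => Y k - fitv b G k.
set c := fun k => (in_region reg X p k) && (X k ord0 i == X k0 ord0 i).
have HS : csum i k0 (fun k => Y k - fitv b' F' k) = \sum_k (c k)%:R * r' k.
  apply: eq_bigr => k _; rewrite Hf /c /cellb.
  move: Hk0; rewrite /in_region -/i => /eqP ->.
  by rewrite eq_sym [X k0 ord0 i == _]eq_sym.
rewrite HS; set S := \sum_k (c k)%:R * r' k.
set n := \sum_k (c k)%:R : R.
have n_ge0 : 0 <= n by apply: sumr_ge0 => k _; rewrite ler0n.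
set eps := S / (n + 1).
have Heps : eps * (n + 1) = S.
  rewrite /eps -mulrA mulVf ?mulr1 //; apply: lt0r_neq0; apply: ltr_pwDr =>//; lra.
pose h := fun x => g x + (if x == X k0 ord0 i then eps else 0).
have := Hmin h; rewrite !region_loss_sum.
have E k : (in_region reg X p k)%:R * (Y k - fitv b (upd_shape F p h) k) ^+ 2 =
   (in_region reg X p k)%:R * r' k ^+ 2 - 2 * eps * ((c k)%:R * r' k)
   + eps ^+ 2 * (c k)%:R.
  rewrite /r' /G !calm_upd /c -/i /h.
  case: (in_region reg X p k); last by rewrite /= ?mul0r ?mulr0 ?subr0 ?addr0.
  case: eqP => _ /=; rewrite ?mul1r ?mulr1 ?mul0r ?mulr0 ?addr0; ring.
under [Z in _ <= Z]eq_bigr do rewrite E.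
rewrite big_split sumrB /= -!mulr_sumr -/S -/n.
move=> H.
have H2 : 0 <= eps ^+ 2 * n - 2 * eps * S by lra.
have H3 : eps ^+ 2 * (n + 2) <= 0.
  by rewrite -Heps in H2; nra.
have : eps = 0 by nra.
by rewrite -Heps => ->; rewrite mul0r.
Qed.

Definition Lo b F := \sum_k (Y k - fitv b F k) ^+ 2.

Lemma region_cell (p : pairT Rr) k0 k :
  cellb (tag p) k0 k -> in_region reg X p k = in_region reg X p k0.
Proof. by rewrite /cellb /in_region => /andP[/eqP -> _]. Qed.

Lemma step_pyth p b F b' F' :
  exact_block_step reg X Y p b F b' F' ->
  Lo b F = Lo b' F' + \sum_k (fitv b' F' k - fitv b F k) ^+ 2.
Proof.
move=> Hstep; have Hz := step_zero Hstep.
case: Hstep => g [_ Hfit].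
set i := tag p.
set del := fun k => fitv b' F' k - fitv b F k.
have Hdel k : del k = if in_region reg X p k then g (X k ord0 i) - F p (X k ord0 i) else 0.
  have E : fitv b' F' k = fitv b (upd_shape F p g) k by exact: Hfit.
  rewrite /del E calm_upd -/i; ring.
set r' := fun k => Y k - fitv b' F' k.
have Horth : \sum_k r' k * del k = 0.
  rewrite (eq_bigr (fun k => (if in_region reg X p k then r' k else 0) * del k)); last first.
    by move=> k _; rewrite Hdel; case: (in_region reg X p k); rewrite ?mulr0 ?mul0r.
  apply: (@orth i).
    move=> k0; case Hk0: (in_region reg X p k0).
      rewrite -(Hz k0 Hk0); apply: eq_bigr => k _.
      case Hc: (cellb i k0 k); last by rewrite !mul0r.
      by rewrite (region_cell Hc) Hk0.
    apply: big1 => k _; case Hc: (cellb i k0 k); last by rewrite mul0r.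
    by rewrite (region_cell Hc) Hk0 mulr0.
  move=> k0 k Hc; rewrite !Hdel (region_cell Hc).
  by move: Hc; rewrite /cellb => /andP[_ /eqP ->].
rewrite /Lo (eq_bigr (fun k => r' k ^+ 2 + 2 * (r' k * del k) + del k ^+ 2)); last first.
  by move=> k _; rewrite /r' /del; ring.
by rewrite !big_split /= -mulr_sumr Horth mulr0 addr0.
Qed.

Definition mJ := #|{: ('I_N * 'I_d)%type}|.
Definition Bm : 'M[R]_(mJ, N) :=
  \matrix_(j, k) (cellb (enum_val j).2 (enum_val j).1 k)%:R.
Definition rowv (u : 'I_N -> R) : 'rV[R]_N := \row_k u k.

Lemma Bm_rank (x : 'I_N * 'I_d) k : Bm (enum_rank x) k = (cellb x.2 x.1 k)%:R.
Proof. by rewrite /Bm mxE enum_rankK. Qed.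

Lemma L1 (d_gt0 : (0 < d)%N) b F : (rowv (fitv b F) <= Bm)%MS.
Proof.
rewrite submxE; apply/eqP/matrixP => a c; rewrite !mxE.
set K := cokermx Bm.
have HK := mulmx_coker Bm; rewrite -/K in HK.
set u := fun k => K k c.
have Hu i k0 : csum i k0 u = 0.
  have := congr1 (fun M : 'M[R]_(mJ, N) => M (enum_rank (k0, i)) c) HK; rewrite !mxE => <-.
  by apply: eq_bigr => k _; rewrite Bm_rank.
rewrite (eq_bigr (fun k => u k * (b + \sum_i F (Tagged (fun j => 'I_(Rr j))
            (reg i (col' i (X k)))) (X k ord0 i)))); last first.
  by move=> k _; rewrite /rowv mxE /fitv /calm_score mulrC.
under eq_bigr do rewrite mulrDr mulr_sumr.
have H1 : \sum_k u k = 0.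
  rewrite (eq_bigr (fun k => u k * 1)); last by move=> k _; rewrite mulr1.
  by apply: (@orth (Ordinal d_gt0) u (fun _ => 1)).
rewrite big_split /= exchange_big /= -mulr_suml H1 mul0r add0r.
apply: big1 => i _.
apply: (@orth i u (fun k => F (Tagged (fun j => 'I_(Rr j))
            (reg i (col' i (X k)))) (X k ord0 i))) => // k0 k Hc.
by move: Hc; rewrite /cellb => /andP[/eqP -> /eqP ->].
Qed.

Lemma fitv_sub b1 F1 b2 F2 k :
  fitv b1 F1 k - fitv b2 F2 k = fitv (b1 - b2) (fun q t => F1 q t - F2 q t) k.
Proof. by rewrite /fitv /calm_score sumrB; ring. Qed.

Lemma gram0 m n (Z : 'M[R]_(m, n)) : Z^T *m Z = 0 -> Z = 0.
Proof.
move=> HZ; apply/matrixP => k c; rewrite [RHS]mxE.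
have := congr1 (fun M : 'M[R]_n => M c c) HZ; rewrite mxE [RHS]mxE => H.
have H2 : \sum_i Z i c ^+ 2 = 0.
  by rewrite -[RHS]H; apply: eq_bigr => i _; rewrite mxE expr2.
have H3 : forall i, true -> Z i c ^+ 2 = 0.
  by apply: psumr_eq0P H2 => i _; exact: sqr_ge0.
by apply/eqP; rewrite -sqrf_eq0 (H3 k isT).
Qed.

Lemma proj_sub : (rowv Y *m Bm^T <= Bm *m Bm^T)%MS.
Proof.
rewrite submxE.
set K := cokermx (Bm *m Bm^T).
have HK := mulmx_coker (Bm *m Bm^T); rewrite -/K in HK.
set Z := Bm^T *m K.
have HZ : Z^T *m Z = 0.
  by rewrite /Z trmx_mul trmxK -mulmxA (mulmxA Bm) HK mulmx0.
have Z0 : Z = 0 by apply: gram0.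
by rewrite -mulmxA -/Z Z0 mulmx0.
Qed.

Definition cstar := rowv Y *m Bm^T *m pinvmx (Bm *m Bm^T).
Definition vst : 'I_N -> R := fun k => (cstar *m Bm) 0 k.

Lemma normal_eq j : \sum_k (Y k - vst k) * Bm j k = 0.
Proof.
have H : (rowv Y - cstar *m Bm) *m Bm^T = 0.
  by rewrite mulmxBl -mulmxA /cstar (mulmxKpV proj_sub) subrr.
have := congr1 (fun M : 'M[R]_(1, mJ) => M 0 j) H; rewrite !mxE => H2.
rewrite -[RHS]H2; apply: eq_bigr => k _; rewrite !mxE /vst /rowv.
by rewrite !mxE.
Qed.

Lemma orth_V w : (rowv w <= Bm)%MS -> \sum_k (Y k - vst k) * w k = 0.
Proof.
move=> /mulmxKpV Hw; set c := rowv w *m pinvmx Bm.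
rewrite (eq_bigr (fun k => (Y k - vst k) * \sum_j c 0 j * Bm j k)); last first.
  move=> k _; congr (_ * _).
  by have := congr1 (fun M : 'M[R]_(1, N) => M 0 k) Hw; rewrite !mxE => <-.
under eq_bigr do rewrite mulr_sumr.
rewrite exchange_big /= big1 // => j _.
rewrite -[RHS](mulr0 (c 0 j)) -[Z in _ * Z](normal_eq j) mulr_sumr.
by apply: eq_bigr => k _; ring.
Qed.

Definition Fstar : shapes R Rr := fun q t =>
  \sum_(j < mJ) cstar 0 j * (((enum_val j).2 == tag q) &&
     (reg (tag q) (col' (tag q) (X (enum_val j).1)) == tagged q) &&
     (X (enum_val j).1 ord0 (tag q) == t))%:R.

Lemma shat_val k : fitv 0 Fstar k = vst k.
Proof.
rewrite /fitv /calm_score add0r /vst mxE /Fstar /=.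
rewrite exchange_big /=; apply: eq_bigr => j _.
rewrite -mulr_sumr; congr (_ * _).
rewrite (bigD1 (enum_val j).2) //= eqxx /= big1 ?addr0; last first.
  by move=> i /negbTE Hi; rewrite eq_sym Hi.
by rewrite /Bm mxE /cellb.
Qed.

Lemma V_diff (d_gt0 : (0 < d)%N) b1 F1 :
  (rowv (fun k => vst k - fitv b1 F1 k) <= Bm)%MS.
Proof.
have Hw := L1 d_gt0 (0 - b1) (fun q t => Fstar q t - F1 q t).
have Ew : fitv (0 - b1) (fun q t => Fstar q t - F1 q t) = (fun k => vst k - fitv b1 F1 k).
  by apply: funext => k; rewrite -fitv_sub shat_val.
by rewrite Ew in Hw.
Qed.

Lemma Lo_opt (d_gt0 : (0 < d)%N) b1 F1 :
  Lo b1 F1 = Lo 0 Fstar + \sum_k (fitv b1 F1 k - vst k) ^+ 2.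
Proof.
have Ho := orth_V (V_diff d_gt0 b1 F1).
rewrite /Lo (eq_bigr (fun k => (Y k - vst k) ^+ 2 + 2 * ((Y k - vst k) * (vst k - fitv b1 F1 k))
   + (fitv b1 F1 k - vst k) ^+ 2)); last by move=> k _; ring.
rewrite !big_split /= -mulr_sumr Ho mulr0 addr0.
by congr (_ + _); apply: eq_bigr => k _; rewrite shat_val.
Qed.

Section Algo.
Variable d_gt0 : (0 < d)%N.
Variables (e : seq (pairT Rr)) (bs : nat -> R) (Fs : nat -> shapes R Rr).
Hypothesis Hall : forall p, p \in e.
Hypothesis Hstep : forall n (j : 'I_(size e)),
  exact_block_step reg X Y (tnth (in_tuple e) j)
    (bs (n * size e + j)%N) (Fs (n * size e + j)%N)
    (bs (n * size e + j).+1) (Fs (n * size e + j).+1).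

Let M := size e.
Let ft t k := fitv (bs t) (Fs t) k.
Let E t := \sum_k (ft t k - vst k) ^+ 2.

Lemma M_gt0 : (0 < M)%N.
Proof.
have H := Hall (Tagged (fun i => 'I_(Rr i)) (reg (Ordinal d_gt0) 0)).
rewrite /M lt0n; apply/eqP => /size0nil E0; by rewrite E0 in H.
Qed.

Lemma Hst t : exact_block_step reg X Y (tnth (in_tuple e) (Ordinal (ltn_pmod t M_gt0)))
   (bs t) (Fs t) (bs t.+1) (Fs t.+1).
Proof. by have := Hstep (t %/ M) (Ordinal (ltn_pmod t M_gt0)); rewrite /= -divn_eq. Qed.

Lemma Lo_dec t : Lo (bs t.+1) (Fs t.+1) <= Lo (bs t) (Fs t).
Proof.
rewrite (step_pyth (Hst t)) lerDl; apply: sumr_ge0 => k _; exact: sqr_ge0.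
Qed.

Lemma E_dec t : E t = E t.+1 + \sum_k (ft t.+1 k - ft t k) ^+ 2.
Proof.
have := step_pyth (Hst t).
rewrite (Lo_opt d_gt0 (bs t)) (Lo_opt d_gt0 (bs t.+1)) /E /ft => H.
by apply: (addrI (Lo 0 Fstar)); rewrite H addrA.
Qed.

Lemma E_ge0 t : 0 <= E t.
Proof. by apply: sumr_ge0 => k _; exact: sqr_ge0. Qed.

Lemma E_mono t : E t.+1 <= E t.
Proof.
rewrite (E_dec t) lerDl; apply: sumr_ge0 => k _; exact: sqr_ge0.
Qed.

Lemma E_mono' s u : E (u + s) <= E s.
Proof.
elim: u => [|u IH]; first by rewrite add0n.
by rewrite addSn; apply: le_trans (E_mono _) IH.
Qed.

Lemma sum_delta t0 : \sum_(s < M) \sum_k (ft (t0 + s.+1) k - ft (t0 + s) k) ^+ 2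
   = E t0 - E (t0 + M).
Proof.
rewrite -(big_mkord xpredT (fun s => \sum_k (ft (t0 + s.+1) k - ft (t0 + s) k) ^+ 2)).
rewrite (telescope_sumr_eq (fun s => - E (t0 + s))) //; first by rewrite addn0; ring.
move=> s _; have := E_dec (t0 + s); rewrite -addnS /ft => ->; ring.
Qed.

Lemma HT n j : (\sum_k Bm j k * (vst k - ft (n * M) k)) ^+ 2 <=
   M%:R * N%:R * (E (n * M) - E (n * M + M)).
Proof.
set t0 := (n * M)%N.
case Ej: (enum_val j) => [k0 i].
have HB k : Bm j k = (cellb i k0 k)%:R by rewrite /Bm mxE Ej.
have HTc : \sum_k Bm j k * (vst k - ft t0 k) = csum i k0 (fun k => Y k - ft t0 k).
  have H0 := normal_eq j.
  rewrite (eq_bigr (fun k => Bm j k * (Y k - ft t0 k) - (Y k - vst k) * Bm j k)); last first.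
    by move=> k _; ring.
  by rewrite sumrB H0 subr0; apply: eq_bigr => k _; rewrite HB.
rewrite HTc.
set p := Tagged (fun i => 'I_(Rr i)) (reg i (col' i (X k0))).
have Hidx : (index p e < M)%N by rewrite /M index_mem.
set idx := index p e in Hidx *.
have Htn : tnth (in_tuple e) (Ordinal Hidx) = p by rewrite (tnth_nth p) /= nth_index.
have Hs := Hstep n (Ordinal Hidx); rewrite Htn /= in Hs.
have Hreg : in_region reg X p k0 by rewrite /in_region /= eqxx.
have Hz := step_zero Hs Hreg; rewrite /= -addnS in Hz.
set del := fun s k => ft (t0 + s.+1) k - ft (t0 + s) k.
have Htel k : ft (t0 + idx.+1) k - ft t0 k = \sum_(s < idx.+1) del s k.
  rewrite -(big_mkord xpredT (fun s => del s k)).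
  by rewrite (telescope_sumr_eq (fun s => ft (t0 + s) k)) // addn0.
have HT2 : csum i k0 (fun k => Y k - ft t0 k) =
    \sum_(s < idx.+1) \sum_k (cellb i k0 k)%:R * del s k.
  rewrite exchange_big /= /csum.
  rewrite (eq_bigr (fun k => (cellb i k0 k)%:R * (Y k - ft (t0 + idx.+1) k)
       + (cellb i k0 k)%:R * (ft (t0 + idx.+1) k - ft t0 k))); last by move=> k _; ring.
  rewrite big_split /= [Z in Z + _]Hz add0r; apply: eq_bigr => k _.
  by rewrite Htel mulr_sumr.
rewrite HT2.
set A1 := \sum_(s < idx.+1) \sum_k del s k ^+ 2.
have S1 : (\sum_(s < idx.+1) \sum_k (cellb i k0 k)%:R * del s k) ^+ 2 <=
     idx.+1%:R * (N%:R * A1).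
  apply: le_trans (@sq_sum_le R _ _) _; rewrite card_ord ler_wpM2l // /A1 mulr_sumr.
  apply: ler_sum => s _; apply: le_trans (@sq_sum_le R _ _) _; rewrite card_ord ler_wpM2l //.
  apply: ler_sum => k _; case: (cellb i k0 k); rewrite ?mul1r ?mul0r //.
  by rewrite expr0n /= sqr_ge0.
have S2 : A1 <= E t0 - E (t0 + M).
  rewrite -sum_delta /A1 (big_ord_widen M (fun s => \sum_k del s k ^+ 2)) //.
  rewrite [Z in _ <= Z](bigID (fun s : 'I_M => (s < idx.+1)%N)) /= lerDl.
  by apply: sumr_ge0 => s _; apply: sumr_ge0 => k _; exact: sqr_ge0.
have A1_ge0 : 0 <= A1.
  by apply: sumr_ge0 => s _; apply: sumr_ge0 => k _; exact: sqr_ge0.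
apply: (le_trans S1).
rewrite mulrA; apply: ler_pM.
- by rewrite mulr_ge0.
- exact: A1_ge0.
- by rewrite ler_pM2r ?ler_nat // ltr0n; apply: leq_ltn_trans (ltn_ord k0).
- exact: S2.
Qed.

Let K1 := \sum_(j < mJ) \sum_k (pinvmx Bm) k j ^+ 2.
Let C := K1 * mJ%:R * M%:R * N%:R + 1.

Lemma K1_ge0 : 0 <= K1.
Proof. by apply: sumr_ge0 => j _; apply: sumr_ge0 => k _; exact: sqr_ge0. Qed.

Lemma C_gt0 : 0 < C.
Proof.
rewrite /C; apply: ltr_pwDr => //.
by rewrite !mulr_ge0 // K1_ge0.
Qed.

Lemma key n : E (n * M) <= C * (E (n * M) - E (n * M + M)).
Proof.
set t0 := (n * M)%N.
set ev := fun k => vst k - ft t0 k.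
have Hw : (rowv ev <= Bm)%MS := V_diff d_gt0 (bs t0) (Fs t0).
have Hw2 := mulmxKpV Hw; set c := rowv ev *m pinvmx Bm in Hw2.
have Hc k : ev k = \sum_j c 0 j * Bm j k.
  have := congr1 (fun M : 'M[R]_(1, N) => M 0 k) Hw2; rewrite mxE => H.
  by rewrite H /rowv mxE.
have Hc2 j : c 0 j = \sum_k ev k * pinvmx Bm k j.
  by rewrite /c mxE; apply: eq_bigr => k _; rewrite /rowv mxE.
have EE : E t0 = \sum_k ev k ^+ 2.
  by apply: eq_bigr => k _; rewrite /ev; ring.
set T := fun j => \sum_k Bm j k * ev k.
have ET : E t0 = \sum_j c 0 j * T j.
  rewrite EE (eq_bigr (fun k => \sum_j ev k * (c 0 j * Bm j k))); last first.
    by move=> k _; rewrite expr2 {2}Hc mulr_sumr.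
  rewrite exchange_big /=; apply: eq_bigr => j _; rewrite /T mulr_sumr.
  by apply: eq_bigr => k _; ring.
have H1 : E t0 ^+ 2 <= (\sum_j c 0 j ^+ 2) * (\sum_j T j ^+ 2).
  by rewrite ET; exact: cauchy_schwarz.
have H2 : \sum_j c 0 j ^+ 2 <= K1 * E t0.
  rewrite EE /K1 mulr_suml; apply: ler_sum => j _; rewrite Hc2.
  by apply: le_trans (@cauchy_schwarz R _ _ _) _; rewrite mulrC.
set D := E t0 - E (t0 + M).
have D_ge0 : 0 <= D by rewrite /D subr_ge0 addnC; exact: E_mono'.
have H3 : \sum_j T j ^+ 2 <= mJ%:R * (M%:R * N%:R * D).
  apply: le_trans (ler_sum _ (fun j _ => HT n j)) _.
  rewrite sumr_const card_ord -/t0 -/D. by rewrite -(mulr_natl (M%:R * N%:R * D) mJ).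
have E0 : 0 <= E t0 by exact: E_ge0.
have Sc0 : 0 <= \sum_j c 0 j ^+ 2 by apply: sumr_ge0 => j _; exact: sqr_ge0.
have ST0 : 0 <= \sum_j T j ^+ 2 by apply: sumr_ge0 => j _; exact: sqr_ge0.
set Q := K1 * mJ%:R * M%:R * N%:R * D.
have Q0 : 0 <= Q by rewrite /Q !mulr_ge0 // K1_ge0.
have H4 : E t0 * E t0 <= E t0 * Q.
  rewrite -expr2; apply: (le_trans H1).
  have -> : E t0 * Q = (K1 * E t0) * (mJ%:R * (M%:R * N%:R * D)) by rewrite /Q; ring.
  by apply: ler_pM.
have H5 : E t0 <= Q by nra.
have -> : C * D = Q + D by rewrite /C /Q; ring.
lra.
Qed.

Let q := 1 - C^-1.

Lemma q_ge0 : 0 <= q.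
Proof.
have Cg := C_gt0.
have HC : 1 <= C by rewrite /C lerDr !mulr_ge0 // K1_ge0.
rewrite /q subr_ge0 invr_le1 //; exact: unitf_gt0.
Qed.

Lemma q_lt1 : q < 1.
Proof. by rewrite /q ltrBlDr ltrDl invr_gt0 C_gt0. Qed.

Lemma contr n : E (n.+1 * M) <= q * E (n * M).
Proof.
have Hk := key n; have Cg := C_gt0.
have H : E (n * M) / C <= E (n * M) - E (n * M + M) by rewrite ler_pdivrMr // mulrC.
rewrite mulSn addnC /q.
have -> : (1 - C^-1) * E (n * M) = E (n * M) - E (n * M) / C by ring.
lra.
Qed.

Lemma geom n : E (n * M) <= q ^+ n * E 0.
Proof.
elim: n => [|n IH]; first by rewrite mul0n expr0 mul1r.
apply: (le_trans (contr n)); rewrite exprS -mulrA.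
by apply: ler_wpM2l; [exact: q_ge0 | exact: IH].
Qed.

Lemma conv : (fun t => N%:R^-1 * E t) @ \oo --> 0.
Proof.
apply/cvgrPdist_lt => eps eps_gt0.
set A := N%:R^-1 * E 0.
have A0 : 0 <= A by rewrite /A mulr_ge0 ?invr_ge0 // E_ge0.
have Hq : `|q| < 1 by rewrite ger0_norm ?q_ge0 // q_lt1.
have := cvg_expr Hq; move/cvgrPdist_lt => /(_ (eps / (A + 1))).
have pos : 0 < eps / (A + 1) by rewrite divr_gt0 // ltr_pwDr.
move=> /(_ pos) [n0 _ Hn0].
exists (n0 * M)%N => // t /= Ht.
have := Hn0 n0 (leqnn n0); rewrite /= sub0r normrN ger0_norm ?exprn_ge0 ?q_ge0 //.
rewrite ltr_pdivlMr ?ltr_pwDr // => Hlt.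
rewrite sub0r normrN ger0_norm ?mulr_ge0 ?invr_ge0 ?E_ge0 //.
have Et : E t <= E (n0 * M) by rewrite -(subnK Ht) E_mono'.
have Hg := geom n0.
have qn0 : 0 <= q ^+ n0 by rewrite exprn_ge0 // q_ge0.
have Ni : 0 <= N%:R^-1 :> R by rewrite invr_ge0.
apply: (le_lt_trans _ Hlt).
apply: (le_trans (ler_wpM2l Ni Et)).
apply: (le_trans (ler_wpM2l Ni Hg)).
rewrite /A; nra.
Qed.

End Algo.

End Main.

Theorem propositionA3 (R : realType) (d : nat) (Rr : 'I_d -> nat)
    (reg : forall i : 'I_d, 'rV[R]_(d.-1) -> 'I_(Rr i))
    (N : nat) (X : 'I_N -> 'rV[R]_d) (Y : 'I_N -> R)
    (e : seq (pairT Rr)) (b : nat -> R) (F : nat -> shapes R Rr) :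
  (0 < d)%N ->
  uniq e -> (forall p : pairT Rr, p \in e) ->
  (forall (n : nat) (j : 'I_(size e)),
      exact_block_step reg X Y (tnth (in_tuple e) j)
        (b (n * size e + j)%N) (F (n * size e + j)%N)
        (b (n * size e + j).+1) (F (n * size e + j).+1)) ->
  (forall t : nat,
      emp_risk X Y (calm_score reg (b t.+1) (F t.+1))
        <= emp_risk X Y (calm_score reg (b t) (F t)))
  /\ (exists shat : 'rV[R]_d -> R,
        calm_class reg shat
        /\ (forall s, calm_class reg s -> emp_risk X Y shat <= emp_risk X Y s)
        /\ (fun t : nat => N%:R^-1 * \sum_(k < N)
              (calm_score reg (b t) (F t) (X k) - shat (X k)) ^+ 2) @ \oo --> 0)
  /\ (forall s1 s2 : 'rV[R]_d -> R,
        calm_class reg s1 -> calm_class reg s2 ->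
        (forall s, calm_class reg s -> emp_risk X Y s1 <= emp_risk X Y s) ->
        (forall s, calm_class reg s -> emp_risk X Y s2 <= emp_risk X Y s) ->
        forall k : 'I_N, s1 (X k) = s2 (X k)).
Proof.
move=> d_gt0 _ Hall Hstep.
have Hconv := conv d_gt0 Hall Hstep.
split.
  move=> t; rewrite /emp_risk; apply: ler_wpM2l; first by rewrite invr_ge0.
  exact: (Lo_dec d_gt0 Hall Hstep t).
have Hopt : forall b' F',
    (forall s, calm_class reg s -> emp_risk X Y (calm_score reg b' F') <= emp_risk X Y s) ->
    forall k, calm_score reg b' F' (X k) = vst reg X Y k.
  move=> b' F' H k.
  have := H (calm_score reg 0 (Fstar reg X Y)) (ex_intro _ 0 (ex_intro _ (Fstar reg X Y) erefl)).
  have N0 : 0 < N%:R^-1 :> R.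
    by rewrite invr_gt0 ltr0n; apply: leq_ltn_trans (ltn_ord k).
  rewrite /emp_risk ler_pM2l //.
  change (Lo reg X Y b' F' <= Lo reg X Y 0 (Fstar reg X Y) -> fitv reg X b' F' k = vst reg X Y k).
  rewrite (Lo_opt reg X Y d_gt0 b') gerDl => HS.
  have HS0 : \sum_k (fitv reg X b' F' k - vst reg X Y k) ^+ 2 = 0.
    by apply/le_anti; rewrite HS /=; apply: sumr_ge0 => i _; exact: sqr_ge0.
  have : (fitv reg X b' F' k - vst reg X Y k) ^+ 2 = 0.
    by apply: (psumr_eq0P _ HS0) => // i _; exact: sqr_ge0.
  by move/eqP; rewrite sqrf_eq0 subr_eq0 => /eqP.
split.
  exists (calm_score reg 0 (Fstar reg X Y)).
  split; first by exists 0, (Fstar reg X Y).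
  split.
    move=> s [b1 [F1 ->]]; rewrite /emp_risk; apply: ler_wpM2l; first by rewrite invr_ge0.
    change (Lo reg X Y 0 (Fstar reg X Y) <= Lo reg X Y b1 F1).
    rewrite (Lo_opt reg X Y d_gt0 b1) lerDl.
    by apply: sumr_ge0 => k _; exact: sqr_ge0.
  have -> : (fun t => N%:R^-1 * \sum_(k < N) (calm_score reg (b t) (F t) (X k)
       - calm_score reg 0 (Fstar reg X Y) (X k)) ^+ 2) =
     (fun t => N%:R^-1 * \sum_k (fitv reg X (b t) (F t) k - vst reg X Y k) ^+ 2).
    apply: funext => t; congr (_ * _); apply: eq_bigr => k _.
    by rewrite -(shat_val reg X Y k).
  exact: Hconv.
move=> s1 s2 [b1 [F1 ->]] [b2 [F2 ->]] H1 H2 k.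
by rewrite (Hopt _ _ H1 k) (Hopt _ _ H2 k).
Qed.
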